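(* Let $S$ be a finite set with $|S|=n$ and let $\mathfrak S$ be a collection of subsets of $S$ such that $|r\triangle s|\in\{0,4,6,8\}$ for all $r,s\in\mathfrak S$ (the subsets may have different cardinalities). Then $|\mathfrak S|\le\max_{m\ge0}\big(\mathcal A_{m,n}+\mathcal A_{m+2,n}+\mathcal A_{m+4,n}+\mathcal A_{m+6,n}+\mathcal A_{m+8,n}\big)$.
   Context: For $0\le m\le n$, $\mathcal A_{m,n}$ is the maximal cardinality of a collection of $m$-element subsets of an $n$-element set such that any two members $r,s$ satisfy $|r\triangle s|\in\{0,4,6,8\}$; one sets $\mathcal A_{m,n}=0$ unless $0\le m\le n$. $\triangle$ is symmetric difference. *)

(* Defs.v *)
From mathcomp Require Import all_boot.
Set Implicit Arguments. Unset Strict Implicit. Unset Printing Implicit Defensive.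

Definition symdiff (T : finType) (r s : {set T}) : {set T} := (r :\: s) :|: (s :\: r).

Definition sd_good (T : finType) (F : {set {set T}}) : bool :=
  [forall r in F, forall s in F, #|symdiff r s| \in [:: 0; 4; 6; 8]].

(* A_{m,n}: maximal size of a sd_good family of m-subsets of an n-element set
   (here the set 'I_n).  For m > n the only such family is empty, so A m n = 0. *)
Definition A (m n : nat) : nat :=
  \max_(F : {set {set 'I_n}} | [forall r in F, #|r| == m] && sd_good F) #|F|.

(* Main.v *)
Require Import Defs.
From mathcomp Require Import all_boot.
From mathcomp Require Import zify.

Lemma card_symdiff (T : finType) (r s : {set T}) :
  #|symdiff r s| = #|r :\: s| + #|s :\: r|.
Proof.
rewrite /symdiff cardsU.
have -> : (r :\: s) :&: (s :\: r) = set0.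
  apply/setP=> x; rewrite !inE; by case: (x \in r); case: (x \in s).
by rewrite cards0 subn0.
Qed.

Lemma transport (T : finType) (n k : nat) (HT : #|T| = n) (G : {set {set T}}) :
  sd_good G -> (forall r, r \in G -> #|r| = k) -> #|G| <= A k n.
Proof.
move=> HG Hk.
pose f : T -> 'I_n := fun x => cast_ord HT (enum_rank x).
pose g : 'I_n -> T := fun i => enum_val (cast_ord (esym HT) i).
have fK : cancel f g by move=> x; rewrite /f /g cast_ordK enum_rankK.
have finj : injective f := can_inj fK.
pose H := [set f @: r | r : {set T} in G].
have cH : #|H| = #|G| by rewrite card_imset //; apply: imset_inj.
rewrite -cH /A.
apply: (@leq_bigmax_cond _ _ (fun F : {set {set 'I_n}} => #|F|) H) => /=.
apply/andP; split.
  apply/forall_inP=> r' /imsetP [r rG ->].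
  by rewrite card_imset // Hk.
apply/forall_inP=> r' /imsetP [r rG ->]; apply/forall_inP=> s' /imsetP [s sG ->].
have E : forall A B : {set T}, f @: A :\: f @: B = f @: (A :\: B).
  have gK : cancel g f by move=> y; rewrite /f /g enum_valK cast_ordKV.
  move=> A0 B0; apply/setP=> y; rewrite -(gK y) inE !mem_imset //; [].
  by rewrite inE.
rewrite !card_symdiff !E !card_imset //.

by move/forall_inP: HG => /(_ r rG) /forall_inP /(_ s sG); rewrite card_symdiff.
Qed.

Theorem lemma4p3 (S : finType) (n : nat) (HS : #|S| = n)
  (F : {set {set S}}) (HF : sd_good F) :
  #|F| <= \max_(m < n.+1) (A m n + A (m + 2) n + A (m + 4) n + A (m + 6) n + A (m + 8) n).
Proof.
have [->|[r1 r1F]] := set_0Vmem F; first by rewrite cards0.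
have ex : exists k, [exists r in F, #|r| == k] by exists #|r1|; apply/existsP; exists r1; rewrite r1F eqxx.
case: (ex_minnP ex) => m /exists_inP [r0 r0F /eqP r0m] mmin.
have Hm : forall r, r \in F -> m <= #|r|.
  move=> r rF; apply: mmin; apply/exists_inP; by exists r.
have sizes : forall r, r \in F ->
  #|r| = m \/ #|r| = m + 2 \/ #|r| = m + 4 \/ #|r| = m + 6 \/ #|r| = m + 8.
  move=> r rF.
  have := Hm r rF.
  move/forall_inP: HF => /(_ r rF) /forall_inP /(_ r0 r0F).
  rewrite card_symdiff.
  have e1 := cardsID r0 r; have e2 := cardsID r r0.
  rewrite setIC in e2.
  rewrite !inE -r0m.
  move: e1 e2; set a := #|r :\: r0|; set b := #|r0 :\: r|; set c := #|r :&: r0|.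
  move=> e1 e2 H1 H2.
  have H1' : a + b = 0 \/ a + b = 4 \/ a + b = 6 \/ a + b = 8.
    by move: H1; rewrite ?inE; lia.
  lia.
pose L j := [set r in F | #|r| == m + j].
have LA : forall j, #|L j| <= A (m + j) n.
  move=> j; apply: (@transport S n (m + j) HS (L j)).
    apply/forall_inP=> r; rewrite inE => /andP [rF _]; apply/forall_inP=> s; rewrite inE => /andP [sF _].
    by move/forall_inP: HF => /(_ r rF) /forall_inP /(_ s sF).
  by move=> r; rewrite inE => /andP [_ /eqP].
have sub : F \subset L 0 :|: L 2 :|: L 4 :|: L 6 :|: L 8.
  apply/subsetP=> r rF; rewrite !inE rF /=.
  move: (sizes r rF); lia.
have mn : m < n.+1.
  rewrite ltnS -r0m -HS; exact: max_card.
apply: leq_trans _ (@leq_bigmax_cond _ xpredT (fun i : 'I_n.+1 => A i n + A (i + 2) n + A (i + 4) n + A (i + 6) n + A (i + 8) n) (Ordinal mn) isT).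
rewrite /=.
apply: leq_trans (subset_leq_card sub) _.
have u := fun X Y : {set {set S}} => (leq_card_setU X Y).1.
have := LA 0; have := LA 2; have := LA 4; have := LA 6; have := LA 8; rewrite addn0.
have := u (L 0 :|: L 2 :|: L 4 :|: L 6) (L 8).
have := u (L 0 :|: L 2 :|: L 4) (L 6).
have := u (L 0 :|: L 2) (L 4).
have := u (L 0) (L 2).
lia.
Qed.
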